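(* The coderivation $d_\psi$ restricts to a differential on $\mathcal{G}^{¡}$, and the counit $(\mathcal{G}^{¡},d_\psi)\to(\mathrm{I},0)$, the coaugmentation $(\mathrm{I},0)\to(\mathcal{G}^{¡},d_\psi)$ and the homotopy $H$ form a deformation retract of dg $\mathbb{S}$-modules. In particular $H_\bullet(\mathcal{G}^{¡},d_\psi)\cong\mathrm{I}$.
   Context: $M$ is spanned by arity-2 elements $\mu=s\bullet$ (degree 1), $\beta=s\langle\,,\rangle$ (degree 2) with trivial $\mathbb{S}_2$-action; $\mathcal{G}=\mathcal{T}(s^{-1}M)/(R)$ is the Gerstenhaber operad and $\mathcal{G}^{¡}\subset\mathcal{T}^c(M)$ its Koszul dual cooperad. $d_\psi$ is the coderivation of $\mathcal{T}^c(M)$ extending $\psi:\mathcal{T}^c(M)\twoheadrightarrow M$, $\mu\mapsto\beta,\beta\mapsto 0$. $H$: for a decorated binary tree with $n$ vertices, $H$ is $\sum_v\frac{\omega(v)}{\binom{n+1}{2}}$ times the tree with $h$ ($\beta\mapsto\mu$, $\mu\mapsto0$) applied at vertex $v$, with Koszul sign, where $\omega(v)=m_vn_v$ is the product of the numbers of leaves above the two inputs of $v$. $\mathrm{I}$ is the unit $\mathbb{S}$-module (one-dimensional in arity 1, degree 0). *)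

(* Defs.v *)
From HB Require Import structures.
From mathcomp Require Import all_boot all_order all_fingroup all_algebra.
Set Implicit Arguments.
Unset Strict Implicit.
Unset Printing Implicit Defensive.
Import GRing.Theory.
Local Open Scope ring_scope.

(** A vertex decorated by [false] is mu = s(product), degree 1;
   a vertex decorated by [true] is beta = s<,>, degree 2.
   Leaves carry labels (natural numbers); an arity-n tree is one whose
   leaf labels, read left to right, form a permutation of 0,...,n-1. *)
Inductive tree : Type :=
| Lf of nat
| Nd of bool & tree & tree.

Definition degv (b : bool) : nat := if b then 2 else 1.

Fixpoint deg (t : tree) : nat :=
  match t with Lf _ => 0 | Nd b l r => (degv b + deg l + deg r)%N end.

Fixpoint leaves (t : tree) : seq nat :=
  match t with Lf i => [:: i] | Nd _ l r => leaves l ++ leaves r end.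

Definition nleaves (t : tree) : nat := size (leaves t).

Fixpoint nvert (t : tree) : nat :=
  match t with Lf _ => 0 | Nd _ l r => (nvert l + nvert r).+1 end.

Definition valid (n : nat) (t : tree) : bool := perm_eq (leaves t) (iota 0 n).

(** Swapping the two children of one vertex; the nat is the exponent of
    the Koszul sign (-1)^(|l||r|) (the S_2-action on M is trivial). *)
Inductive swap1 : tree -> tree -> nat -> Prop :=
| sw_root b l r : swap1 (Nd b l r) (Nd b r l) (deg l * deg r)
| sw_left b l l' r e : swap1 l l' e -> swap1 (Nd b l r) (Nd b l' r) e
| sw_right b l r r' e : swap1 r r' e -> swap1 (Nd b l r) (Nd b l r') e.

(** An element of T^c(M)(n) is represented by its coefficient function
    on planar labelled trees, which is Koszul-symmetric under swaps and
    supported on arity-n trees (the element is sum_t f(t) t). *)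
Definition Tc (F : fieldType) (n : nat) (f : tree -> F) : Prop :=
  (forall t, ~~ valid n t -> f t = 0) /\
  (forall t t' e, swap1 t t' e -> f t' = (-1) ^+ e * f t).

(** The coderivation d_psi (psi : mu |-> beta, beta |-> 0), applied at
    each vertex with the Koszul sign (-1)^(degrees of the vertices
    preceding it in preorder).  [dsum g t pre] computes the coefficient
    of t in d(x), where g is f precomposed with the ambient context. *)
Fixpoint dsum (F : fieldType) (g : tree -> F) (t : tree) (pre : nat) : F :=
  match t with
  | Lf _ => 0
  | Nd b l r =>
      (if b then (-1) ^+ pre * g (Nd false l r) else 0)
      + dsum (fun l' => g (Nd b l' r)) l (pre + degv b)
      + dsum (fun r' => g (Nd b l r')) r (pre + degv b + deg l)
  end.

Definition dpsi (F : fieldType) (f : tree -> F) : tree -> F :=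
  fun t => dsum f t 0.

(** The homotopy H: h : beta |-> mu, mu |-> 0 applied at vertex v with
    weight omega(v) = m_v n_v (numbers of leaves above the two inputs of v),
    divided by binomial(n+1, 2), n the number of vertices. *)
Fixpoint hsum (F : fieldType) (g : tree -> F) (t : tree) (pre : nat) : F :=
  match t with
  | Lf _ => 0
  | Nd b l r =>
      (if b then 0
       else (-1) ^+ pre * (nleaves l * nleaves r)%:R * g (Nd true l r))
      + hsum (fun l' => g (Nd b l' r)) l (pre + degv b)
      + hsum (fun r' => g (Nd b l r')) r (pre + degv b + deg l)
  end.

Definition Hop (F : fieldType) (f : tree -> F) : tree -> F :=
  fun t => ('C((nvert t).+1, 2))%:R^-1 * hsum f t 0.

(** ** Corelations s^2 R in arity 3 (leaves 0,1,2).
    [mirr t t'] : t and t' agree up to swapping children (in arity 3 all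
    Koszul signs of swaps are +1, leaves having degree 0). *)
Fixpoint mirr (t t' : tree) : bool :=
  match t, t' with
  | Lf i, Lf j => i == j
  | Nd b l r, Nd b' l' r' =>
      (b == b') && ((mirr l l' && mirr r r') || (mirr l r' && mirr r l'))
  | _, _ => false
  end.

Definition cls (F : fieldType) (t0 : tree) : tree -> F :=
  fun t => if mirr t0 t then 1 else 0.

Notation MU := false.
Notation BE := true.

(** Generators of s^2 R, where R are the relations of the Gerstenhaber
    operad G = T(s^{-1}M)/(R) (associativity of the product, Jacobi for
    the degree-1 bracket, Leibniz), transported by s^2. *)
Definition s2R_gen (F : fieldType) (i : 'I_6) : tree -> F :=
  match val i with
  | 0 => fun t => cls F (Nd MU (Nd MU (Lf 0) (Lf 1)) (Lf 2)) t
                  - cls F (Nd MU (Nd MU (Lf 1) (Lf 2)) (Lf 0)) t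
  | 1 => fun t => cls F (Nd MU (Nd MU (Lf 1) (Lf 2)) (Lf 0)) t
                  - cls F (Nd MU (Nd MU (Lf 0) (Lf 2)) (Lf 1)) t
  | 2 => fun t => cls F (Nd BE (Nd BE (Lf 0) (Lf 1)) (Lf 2)) t
                  + cls F (Nd BE (Nd BE (Lf 1) (Lf 2)) (Lf 0)) t
                  + cls F (Nd BE (Nd BE (Lf 0) (Lf 2)) (Lf 1)) t
  | 3 => fun t => cls F (Nd BE (Nd MU (Lf 1) (Lf 2)) (Lf 0)) t
                  + cls F (Nd MU (Nd BE (Lf 1) (Lf 0)) (Lf 2)) t
                  + cls F (Nd MU (Nd BE (Lf 2) (Lf 0)) (Lf 1)) t
  | 4 => fun t => cls F (Nd BE (Nd MU (Lf 0) (Lf 2)) (Lf 1)) t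
                  + cls F (Nd MU (Nd BE (Lf 0) (Lf 1)) (Lf 2)) t
                  + cls F (Nd MU (Nd BE (Lf 2) (Lf 1)) (Lf 0)) t
  | _ => fun t => cls F (Nd BE (Nd MU (Lf 0) (Lf 1)) (Lf 2)) t
                  + cls F (Nd MU (Nd BE (Lf 0) (Lf 2)) (Lf 1)) t
                  + cls F (Nd MU (Nd BE (Lf 1) (Lf 2)) (Lf 0)) t
  end.

Definition in_s2R (F : fieldType) (g : tree -> F) : Prop :=
  exists c : 'I_6 -> F,
    forall s, valid 3 s -> g s = \sum_(i < 6) c i * s2R_gen F i s.

(** One-hole contexts, grafting of three input trees A B C on the leaves
    0 1 2 of an arity-3 tree, and the Koszul sign of bringing the
    decorations of the arity-3 piece in front of the blocks A, B, C
    (in this order). *)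
Inductive ctx : Type :=
| Hole
| CL of bool & ctx & tree
| CR of bool & tree & ctx.

Fixpoint plug (c : ctx) (t : tree) : tree :=
  match c with
  | Hole => t
  | CL b c' r => Nd b (plug c' t) r
  | CR b l c' => Nd b l (plug c' t)
  end.

Fixpoint graft3 (s A B C : tree) : tree :=
  match s with
  | Lf 0 => A
  | Lf 1 => B
  | Lf _ => C
  | Nd b l r => Nd b (graft3 l A B C) (graft3 r A B C)
  end.

(* tokens (key, degree) in preorder: decorations get key 0, the block
   grafted on leaf i gets key i+1 *)
Fixpoint toks (s A B C : tree) : seq (nat * nat) :=
  match s with
  | Lf 0 => [:: (1, deg A)]
  | Lf 1 => [:: (2, deg B)]
  | Lf _ => [:: (3, deg C)]
  | Nd b l r => (0, degv b) :: toks l A B C ++ toks r A B C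
  end%N.

Fixpoint kinv (l : seq (nat * nat)) : nat :=
  match l with
  | [::] => 0
  | a :: l' => (\sum_(x <- l' | x.1 < a.1) a.2 * x.2 + kinv l')%N
  end.

Definition ksign (F : fieldType) (s A B C : tree) : F :=
  (-1) ^+ kinv (toks s A B C).

(** The Koszul dual cooperad G^¡(n) inside T^c(M)(n): the sub-cooperad
    cogenerated by M with corelations s^2 R, i.e. the elements whose
    component at every internal edge lies in s^2 R. *)
Definition Gshriek (F : fieldType) (n : nat) (f : tree -> F) : Prop :=
  Tc n f /\
  forall (c : ctx) (A B C : tree),
    in_s2R (fun s => ksign F s A B C * f (plug c (graft3 s A B C))).

(** Counit G^¡ -> I and coaugmentation I -> G^¡, arity by arity:
    I(1) = F (the trivial tree Lf 0), I(n) = 0 for n <> 1. *)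
Definition counit (F : fieldType) (n : nat) (f : tree -> F) : F :=
  if n == 1%N then f (Lf 0) else 0.

Definition coaug (F : fieldType) (n : nat) (x : F) : tree -> F :=
  fun t => match t with
           | Lf 0 => if n == 1%N then x else 0
           | _ => 0
           end.

Definition permf (n : nat) (s : 'S_n) (i : nat) : nat :=
  oapp (fun j : 'I_n => val (s j)) i (insub i).

Fixpoint relabel (p : nat -> nat) (t : tree) : tree :=
  match t with
  | Lf i => Lf (p i)
  | Nd b l r => Nd b (relabel p l) (relabel p r)
  end.

(* Main.v *)
Require Import Defs.
From HB Require Import structures.
From mathcomp Require Import all_boot all_order all_fingroup all_algebra.
From mathcomp Require Import ring lra zify.
Import GRing.Theory.
Local Open Scope ring_scope.
Set Implicit Arguments. Unset Strict Implicit.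

Section Gen.
Variable F : fieldType.
Implicit Types (g h : tree -> F) (t u l r : tree).

Fixpoint gsum (b0 : bool) (w : nat -> nat -> F) (g : tree -> F) (t : tree) (pre : nat) : F :=
  match t with
  | Lf _ => 0
  | Nd b l r =>
     (if b == b0 then (-1) ^+ pre * w (nleaves l) (nleaves r) * g (Nd (~~ b) l r) else 0)
     + gsum b0 w (fun l' => g (Nd b l' r)) l (pre + degv b)%N
     + gsum b0 w (fun r' => g (Nd b l r')) r (pre + degv b + deg l)%N
  end.

Definition wd (a b : nat) : F := 1.
Definition wh (a b : nat) : F := (a * b)%:R.

Lemma dsumE g t pre : dsum g t pre = gsum true wd g t pre.
Proof.
elim: t g pre => //= b l IHl r IHr g pre; rewrite IHl IHr.
by case: b => //=; rewrite /wd mulr1.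
Qed.

Lemma hsumE g t pre : hsum g t pre = gsum false wh g t pre.
Proof.
elim: t g pre => //= b l IHl r IHr g pre; rewrite IHl IHr.
by case: b.
Qed.

Inductive flip (b0 : bool) : tree -> tree -> Prop :=
| fl_root l r : flip b0 (Nd b0 l r) (Nd (~~b0) l r)
| fl_left b l l' r : flip b0 l l' -> flip b0 (Nd b l r) (Nd b l' r)
| fl_right b l r r' : flip b0 r r' -> flip b0 (Nd b l r) (Nd b l r').

Lemma gsum_eq b0 w g g' t pre :
  (forall u, flip b0 t u -> g u = g' u) -> gsum b0 w g t pre = gsum b0 w g' t pre.
Proof.
elim: t g g' pre => //= b l IHl r IHr g g' pre H.
rewrite (IHl (fun l' => g (Nd b l' r)) (fun l' => g' (Nd b l' r))); last first.
  by move=> u Hu; apply: H; constructor.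
rewrite (IHr (fun r' => g (Nd b l r')) (fun r' => g' (Nd b l r'))); last first.
  by move=> u Hu; apply: H; constructor.
case: eqP => // Eb; rewrite H // Eb; exact: fl_root.
Qed.

Lemma flip_leaves b0 t u : flip b0 t u -> leaves u = leaves t.
Proof. by elim=> //= *; congruence. Qed.
Lemma flip_nleaves b0 t u : flip b0 t u -> nleaves u = nleaves t.
Proof. by move=> /flip_leaves; rewrite /nleaves => ->. Qed.
Lemma flip_nvert b0 t u : flip b0 t u -> nvert u = nvert t.
Proof. by elim=> //= *; congruence. Qed.
Lemma flip_deg b0 t u : flip b0 t u -> (degv b0 + deg u = degv (~~b0) + deg t)%N.
Proof.
elim=> /= [l r|b l l' r _ IH|b l r r' _ IH]; last 2 first.
- lia.
- lia.
- by case: b0.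
Qed.

Lemma gsumZ b0 w (k : F) g t pre :
  gsum b0 w (fun u => k * g u) t pre = k * gsum b0 w g t pre.
Proof.
elim: t g pre => /= [_ _ _|b l IHl r IHr g pre]; first by rewrite mulr0.
rewrite IHl IHr !mulrDr; congr (_ + _ + _).
by case: eqP => _; rewrite ?mulr0 // mulrCA mulrA [k * _]mulrC.
Qed.

Lemma gsumD b0 w g g' t pre :
  gsum b0 w (fun u => g u + g' u) t pre = gsum b0 w g t pre + gsum b0 w g' t pre.
Proof.
elim: t g g' pre => /= [_ _ _ _|b l IHl r IHr g g' pre]; first by rewrite addr0.
rewrite IHl IHr.
case: eqP => _; ring.
Qed.

Lemma gsum0 b0 w t pre : gsum b0 w (fun _ => 0) t pre = 0.
Proof.
elim: t pre => //= b l IHl r IHr pre; rewrite IHl IHr; case: eqP => _; ring.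
Qed.

Lemma gsum_shift b0 w g t pre k :
  gsum b0 w g t (pre + k) = (-1) ^+ k * gsum b0 w g t pre.
Proof.
elim: t g pre => /= [_ _|b l IHl r IHr g pre]; first by rewrite mulr0.
have -> : (pre + k + degv b = (pre + degv b) + k)%N by lia.
have -> : (pre + degv b + k + deg l = (pre + degv b + deg l) + k)%N by lia.
rewrite IHl IHr exprD; case: eqP => _; ring.
Qed.

Lemma gsum_pre b0 w g t pre : gsum b0 w g t pre = (-1) ^+ pre * gsum b0 w g t 0.
Proof. by rewrite -gsum_shift add0n. Qed.


Lemma gsum_Nd b0 w g b l r :
  gsum b0 w g (Nd b l r) 0 =
    (if b == b0 then w (nleaves l) (nleaves r) else 0) * g (Nd (~~b) l r)
    + (-1) ^+ degv b * gsum b0 w (fun x => g (Nd b x r)) l 0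
    + (-1) ^+ (degv b + deg l) * gsum b0 w (fun y => g (Nd b l y)) r 0.
Proof.
rewrite /= -!gsum_pre !add0n; congr (_ + _ + _).
by case: eqP => _; rewrite ?mul1r ?mul0r.
Qed.

Lemma gsum_sign b0 w g t p :
  gsum b0 w (fun x => (-1) ^+ deg x * g x) t p = (-1) ^+ (deg t).+1 * gsum b0 w g t p.
Proof.
rewrite -gsumZ; apply: gsum_eq => u /flip_deg H; congr (_ * _).
rewrite -signr_odd -[in RHS]signr_odd; congr (_ ^+ _).
by case: b0 H => /= H; apply/eqP; rewrite -(eqn_add2l 1) ?H; case: (deg t) H => //= *;
  rewrite ?negbK //; try (apply/eqP; lia).
Qed.

End Gen.
Arguments gsum_eq {F b0 w g} g' {t pre}.
Arguments wd {F}. Arguments wh {F}.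

Section Comm.
Variable F : fieldType.

Lemma gsum_comm b0 (w : nat -> nat -> F) b1 w1 (G : tree -> tree -> F) t1 t2 :
  gsum b0 w (fun x => gsum b1 w1 (G x) t2 0) t1 0
  = gsum b1 w1 (fun y => gsum b0 w (fun x => G x y) t1 0) t2 0.
Proof.
elim: t1 G => [i|b l IHl r IHr] G.
  by rewrite /= gsum0.
rewrite gsum_Nd (IHl (fun x => G (Nd b x r))) (IHr (fun y => G (Nd b l y))).
rewrite [RHS](gsum_eq (fun y => (if b == b0 then w (nleaves l) (nleaves r) else 0) * G (Nd (~~b) l r) y
    + (-1) ^+ degv b * gsum b0 w (fun x => G (Nd b x r) y) l 0
    + (-1) ^+ (degv b + deg l) * gsum b0 w (fun x => G (Nd b l x) y) r 0)).
  by rewrite !gsumD !gsumZ.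
by move=> u _; rewrite gsum_Nd.
Qed.

Lemma gsum_Nd' b0 (w : nat -> nat -> F) g b l r :
  gsum b0 w g (Nd b l r) 0 =
    (if b == b0 then w (nleaves l) (nleaves r) else 0) * g (Nd (~~b) l r)
    + (-1) ^+ degv b * gsum b0 w (fun x => g (Nd b x r)) l 0
    + (-1) ^+ degv b * ((-1) ^+ deg l * gsum b0 w (fun y => g (Nd b l y)) r 0).
Proof. by rewrite gsum_Nd exprD mulrA. Qed.

Lemma sign_degv b : (-1) ^+ degv b = (if b then 1 else -1 : F).
Proof. by case: b; rewrite /= ?expr1 // -signr_odd. Qed.

Lemma dd (g : tree -> F) t : gsum true wd (fun u => gsum true wd g u 0) t 0 = 0.
Proof.
elim: t g => [i|b l IHl r IHr] g; first by [].
rewrite gsum_Nd'.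
rewrite [gsum _ _ (fun x => gsum _ _ g (Nd b x r) 0) l 0](gsum_eq (fun x =>
   (if b == true then wd (nleaves x) (nleaves r) else 0) * g (Nd (~~b) x r)
   + (-1) ^+ degv b * gsum true wd (fun x' => g (Nd b x' r)) x 0
   + (-1) ^+ degv b * ((-1) ^+ deg x * gsum true wd (fun y => g (Nd b x y)) r 0))); last first.
  by move=> u _; rewrite gsum_Nd'.
rewrite [gsum _ _ (fun y => gsum _ _ g (Nd b l y) 0) r 0](gsum_eq (fun y =>
   (if b == true then wd (nleaves l) (nleaves y) else 0) * g (Nd (~~b) l y)
   + (-1) ^+ degv b * gsum true wd (fun x' => g (Nd b x' y)) l 0
   + (-1) ^+ degv b * ((-1) ^+ deg l * gsum true wd (fun y' => g (Nd b l y')) y 0))); last first.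
  by move=> u _; rewrite gsum_Nd'.
rewrite /wd !gsumD !gsumZ gsum_sign IHl IHr.
rewrite (gsum_comm true wd true wd (fun x y => g (Nd b x y)) l r).
rewrite gsum_Nd' sign_degv exprS.
case: b => /=; rewrite ?gsum0; ring.
Qed.


Lemma bin2D a b : 'C(a + b, 2) = ('C(a, 2) + 'C(b, 2) + a * b)%N.
Proof.
elim: b => [|b IH]; first by rewrite addn0 bin0n muln0 !addn0.
rewrite addnS binS IH bin1 binS bin1; lia.
Qed.

Lemma nleaves_Nd b l r : nleaves (Nd b l r) = (nleaves l + nleaves r)%N.
Proof. by rewrite /nleaves /= size_cat. Qed.

Lemma dk (g : tree -> F) t :
  gsum true wd (fun u => gsum false wh g u 0) t 0 + gsum false wh (fun u => gsum true wd g u 0) t 0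
  = ('C(nleaves t, 2))%:R * g t.
Proof.
elim: t g => [i|b l IHl r IHr] g; first by rewrite /= addr0 /nleaves /= mul0r.
rewrite !gsum_Nd'.
rewrite [gsum _ _ (fun x => gsum false wh g (Nd b x r) 0) l 0](gsum_eq (fun x =>
   (if b == false then wh (nleaves l) (nleaves r) else 0) * g (Nd (~~b) x r)
   + (-1) ^+ degv b * gsum false wh (fun x' => g (Nd b x' r)) x 0
   + (-1) ^+ degv b * ((-1) ^+ deg x * gsum false wh (fun y => g (Nd b x y)) r 0))); last first.
  by move=> u Hu; rewrite gsum_Nd' (flip_nleaves Hu).
rewrite [gsum _ _ (fun y => gsum false wh g (Nd b l y) 0) r 0](gsum_eq (fun y =>
   (if b == false then wh (nleaves l) (nleaves r) else 0) * g (Nd (~~b) l y)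
   + (-1) ^+ degv b * gsum false wh (fun x' => g (Nd b x' y)) l 0
   + (-1) ^+ degv b * ((-1) ^+ deg l * gsum false wh (fun y' => g (Nd b l y')) y 0))); last first.
  by move=> u Hu; rewrite gsum_Nd' (flip_nleaves Hu).
rewrite [gsum _ _ (fun x => gsum true wd g (Nd b x r) 0) l 0](gsum_eq (fun x =>
   (if b == true then wd (nleaves l) (nleaves r) else 0) * g (Nd (~~b) x r)
   + (-1) ^+ degv b * gsum true wd (fun x' => g (Nd b x' r)) x 0
   + (-1) ^+ degv b * ((-1) ^+ deg x * gsum true wd (fun y => g (Nd b x y)) r 0))); last first.
  by move=> u Hu; rewrite gsum_Nd' (flip_nleaves Hu).
rewrite [gsum _ _ (fun y => gsum true wd g (Nd b l y) 0) r 0](gsum_eq (fun y =>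
   (if b == true then wd (nleaves l) (nleaves r) else 0) * g (Nd (~~b) l y)
   + (-1) ^+ degv b * gsum true wd (fun x' => g (Nd b x' y)) l 0
   + (-1) ^+ degv b * ((-1) ^+ deg l * gsum true wd (fun y' => g (Nd b l y')) y 0))); last first.
  by move=> u Hu; rewrite gsum_Nd' (flip_nleaves Hu).
rewrite !gsumD !gsumZ !gsum_sign.
have Hl : gsum true wd (fun x => gsum false wh (fun x' => g (Nd b x' r)) x 0) l 0
  = ('C(nleaves l, 2))%:R * g (Nd b l r)
    - gsum false wh (fun x => gsum true wd (fun x' => g (Nd b x' r)) x 0) l 0
  by move: (IHl (fun x' => g (Nd b x' r))) => /= <-; rewrite addrK.
have Hr : gsum true wd (fun x => gsum false wh (fun x' => g (Nd b l x')) x 0) r 0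
  = ('C(nleaves r, 2))%:R * g (Nd b l r)
    - gsum false wh (fun x => gsum true wd (fun x' => g (Nd b l x')) x 0) r 0
  by move: (IHr (fun x' => g (Nd b l x'))) => /= <-; rewrite addrK.
rewrite Hl Hr.
rewrite (gsum_comm true wd false wh (fun x y => g (Nd b x y)) l r).
rewrite (gsum_comm false wh true wd (fun x y => g (Nd b x y)) l r).
rewrite nleaves_Nd bin2D !natrD natrM.
clear Hl Hr IHl IHr.
rewrite !sign_degv !exprS; case: b => /=; rewrite /wd /wh ?natrM;
  repeat match goal with |- context [gsum ?a ?b ?c ?d ?e] => generalize (gsum a b c d e); intro end;
  rewrite -[(-1) ^+ deg l]signr_odd; case: (odd (deg l)); rewrite ?expr0 ?expr1; ring.
Qed.

End Comm.

Section TcSec.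
Variable F : fieldType.

Lemma flip_odd b0 t u : flip b0 t u -> odd (deg u) = ~~ odd (deg t).
Proof.
move/flip_deg/(congr1 odd); rewrite !oddD.
have -> : odd (degv b0) = ~~ odd (degv (~~ b0)) by case: b0.
by case: (odd (degv (~~b0))); case: (odd (deg u)); case: (odd (deg t)).
Qed.

Lemma gsum_signk b0 (w : nat -> nat -> F) k g t p :
  gsum b0 w (fun x => (-1) ^+ (k * deg x) * g x) t p
  = (-1) ^+ (k * (deg t).+1) * gsum b0 w g t p.
Proof.
rewrite -gsumZ; apply: gsum_eq => u /flip_odd H; congr (_ * _).
by rewrite -signr_odd -[in RHS]signr_odd !oddM H /=.
Qed.

Lemma gsum_signk' b0 (w : nat -> nat -> F) k g t p :
  gsum b0 w (fun x => (-1) ^+ (deg x * k) * g x) t p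
  = (-1) ^+ ((deg t).+1 * k) * gsum b0 w g t p.
Proof.
rewrite (gsum_eq (fun x => (-1) ^+ (k * deg x) * g x)).
  by rewrite gsum_signk mulnC.
by move=> u _; rewrite mulnC.
Qed.

Lemma swap_deg t t' e : swap1 t t' e -> deg t' = deg t.
Proof. by elim=> /= *; lia. Qed.
Lemma swap_nleaves t t' e : swap1 t t' e -> nleaves t' = nleaves t.
Proof. by elim=> /= *; rewrite !nleaves_Nd; lia. Qed.
Lemma swap_nvert t t' e : swap1 t t' e -> nvert t' = nvert t.
Proof. by elim=> /= *; lia. Qed.
Lemma swap_leaves t t' e : swap1 t t' e -> perm_eq (leaves t') (leaves t).
Proof.
elim=> /= [b l r|b l l' r e' _ IH|b l r r' e' _ IH].
- by rewrite perm_catC.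
- by rewrite perm_cat2r.
- by rewrite perm_cat2l.
Qed.

Definition swcompat (g : tree -> F) :=
  forall u u' e, swap1 u u' e -> g u' = (-1) ^+ e * g u.


Lemma sgnE n : (-1) ^+ n = (if odd n then -1 else 1 : F).
Proof. by rewrite -signr_odd; case: (odd n); rewrite ?expr1 ?expr0. Qed.

Lemma gsum_preD b0 (w : nat -> nat -> F) g t a b :
  gsum b0 w g t (a + b)%N = (-1) ^+ (a + b) * gsum b0 w g t 0.
Proof. exact: gsum_pre. Qed.

Ltac signs := rewrite ?sgnE ?oddD ?oddM /=;
  repeat match goal with |- context[odd ?x] => case: (odd x) end; rewrite /=.

Lemma gsum_swap b0 (w : nat -> nat -> F) t t' e :
  (forall a b, w a b = w b a) ->
  swap1 t t' e -> forall g pre, swcompat g ->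
  gsum b0 w g t' pre = (-1) ^+ e * gsum b0 w g t pre.
Proof.
move=> wC; elim=> [b l r|b l l' r e' Hs IH|b l r r' e' Hs IH] g pre Hg /=.
- rewrite (gsum_eq (fun x => (-1) ^+ (deg l * deg x) * g (Nd b l x)) (t:=r)); last first.
    by move=> u _; rewrite (Hg _ _ _ (sw_root b l u)).
  rewrite (gsum_eq (fun y => (-1) ^+ (deg y * deg r) * g (Nd b y r)) (t:=l)); last first.
    by move=> u _; rewrite (Hg _ _ _ (sw_root b u r)).
  rewrite gsum_signk gsum_signk' !gsum_preD (Hg _ _ _ (sw_root (~~b) l r)) wC.
  move: (gsum _ _ _ l 0) (gsum _ _ _ r 0) (g _) => X Y Z.
  rewrite !sgnE !oddD !oddM ?oddS.
  case: (b == b0); case: (odd pre); case: (odd (degv b)); case: (odd (deg l)); case: (odd (deg r)); rewrite /=; ring.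
- have Hc : swcompat (fun x => g (Nd b x r)).
    by move=> u u' e0 Hu; apply: Hg; apply: sw_left.
  rewrite IH // (swap_nleaves Hs) (swap_deg Hs) (Hg _ _ _ (sw_left (~~b) r Hs)).
  rewrite (gsum_eq (fun y => (-1) ^+ e' * g (Nd b l y)) (t:=r)); last first.
    by move=> u _; rewrite (Hg _ _ _ (sw_left b u Hs)).
  rewrite gsumZ; case: (b == b0); ring.
- have Hc : swcompat (fun x => g (Nd b l x)).
    by move=> u u' e0 Hu; apply: Hg; apply: sw_right.
  rewrite IH // (swap_nleaves Hs) (Hg _ _ _ (sw_right (~~b) l Hs)).
  rewrite (gsum_eq (fun y => (-1) ^+ e' * g (Nd b y r)) (t:=l)); last first.
    by move=> u _; rewrite (Hg _ _ _ (sw_right b u Hs)).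
  rewrite gsumZ; case: (b == b0); ring.
Qed.


Lemma Tc_ext n (f g : tree -> F) : Tc n f -> (forall t, f t = g t) -> Tc n g.
Proof.
move=> [H1 H2] E; split=> [t Ht|t t' e Hs]; rewrite -!E; [exact: H1|exact: H2 Hs].
Qed.

Lemma Tc_gsum n b0 (w : nat -> nat -> F) f :
  (forall a b, w a b = w b a) -> Tc n f -> Tc n (fun t => gsum b0 w f t 0).
Proof.
move=> wC [H1 H2]; split=> [t Ht|t t' e Hs].
  rewrite (gsum_eq (fun _ => 0)) ?gsum0 // => u Hu; apply: H1.
  by rewrite /valid (flip_leaves Hu).
by apply: gsum_swap => // u u' e' Hu; apply: H2.
Qed.

Lemma dpsiE (f : tree -> F) t : dpsi f t = gsum true wd f t 0.
Proof. exact: dsumE. Qed.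

Lemma HopE (f : tree -> F) t :
  Hop f t = ('C((nvert t).+1, 2))%:R^-1 * gsum false wh f t 0.
Proof. by rewrite /Hop hsumE. Qed.

Lemma Tc_dpsi n (f : tree -> F) : Tc n f -> Tc n (dpsi f).
Proof.
move=> H; apply: (Tc_ext (f := fun t => gsum true wd f t 0)) => [|t]; last by rewrite dpsiE.
by apply: Tc_gsum.
Qed.

Lemma Tc_Hop n (f : tree -> F) : Tc n f -> Tc n (Hop f).
Proof.
move=> H; have [H1 H2] := Tc_gsum false (w := wh) (fun a b => congr1 _ (mulnC a b)) H.
split=> [t Ht|t t' e Hs]; rewrite !HopE.
  by rewrite H1 // mulr0.
by rewrite (H2 _ _ _ Hs) (swap_nvert Hs) mulrCA.
Qed.

End TcSec.

Lemma leaves_nonnil t : (0 < size (leaves t))%N.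
Proof. by elim: t => //= b l IHl r IHr; rewrite size_cat addn_gt0 IHl. Qed.

Notation L := Lf.
Notation N := Nd.

Lemma valid3_cases (P : tree -> Prop) :
  (forall b1 b2, P (N b1 (N b2 (L 0) (L 1)) (L 2))) ->
  (forall b1 b2, P (N b1 (N b2 (L 0) (L 2)) (L 1))) ->
  (forall b1 b2, P (N b1 (N b2 (L 1) (L 0)) (L 2))) ->
  (forall b1 b2, P (N b1 (N b2 (L 1) (L 2)) (L 0))) ->
  (forall b1 b2, P (N b1 (N b2 (L 2) (L 0)) (L 1))) ->
  (forall b1 b2, P (N b1 (N b2 (L 2) (L 1)) (L 0))) ->
  (forall b1 b2, P (N b1 (L 0) (N b2 (L 1) (L 2)))) ->
  (forall b1 b2, P (N b1 (L 0) (N b2 (L 2) (L 1)))) ->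
  (forall b1 b2, P (N b1 (L 1) (N b2 (L 0) (L 2)))) ->
  (forall b1 b2, P (N b1 (L 1) (N b2 (L 2) (L 0)))) ->
  (forall b1 b2, P (N b1 (L 2) (N b2 (L 0) (L 1)))) ->
  (forall b1 b2, P (N b1 (L 2) (N b2 (L 1) (L 0)))) ->
  forall s, valid 3 s -> P s.
Proof.
move=> H1 H2 H3 H4 H5 H6 H7 H8 H9 H10 H11 H12 s; rewrite /valid => Hp.
have Hs := perm_size Hp.
have P3 : forall i j k : nat, perm_eq [:: i; j; k] [:: 0; 1; 2]%N ->
    (i, j, k) = (0, 1, 2)%N \/ (i, j, k) = (0, 2, 1)%N \/ (i, j, k) = (1, 0, 2)%N \/
        (i, j, k) = (1, 2, 0)%N \/ (i, j, k) = (2, 0, 1)%N \/ (i, j, k) = (2, 1, 0)%N.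
  move=> i j k H.
  have : [&& i \in [:: 0; 1; 2]%N, j \in [:: 0; 1; 2]%N & k \in [:: 0; 1; 2]%N].
    by rewrite -!(perm_mem H) !inE !eqxx ?orbT.
  rewrite !inE => /and3P [Hi Hj Hk].
  move: H; case/or3P: Hi => /eqP ->; case/or3P: Hj => /eqP ->; case/or3P: Hk => /eqP -> //= _.
  1-6: by do ?[left; reflexivity | right].
case: s Hp Hs => [i|b1 l r] //.
move=> Hp Hs; move: Hs; rewrite /= size_cat => Hs.
case: l Hp Hs => [i|b2 ll lr].
  case: r => [j|b3 rl rr]; first by [].
  case: rl => [j|? a b]; last by rewrite /= !size_cat => _ Hs; move: (leaves_nonnil a) (leaves_nonnil b) (leaves_nonnil rr) Hs; lia.
  case: rr => [k|? a b]; last by rewrite /= !size_cat => _ Hs; move: (leaves_nonnil a) (leaves_nonnil b) Hs; lia.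
  by move=> /= /P3 [|[|[|[|[|]]]]] [-> -> ->] _; auto.
case: ll => [i|? a b]; last by rewrite /= !size_cat => _ Hs; move: (leaves_nonnil a) (leaves_nonnil b) (leaves_nonnil lr) (leaves_nonnil r) Hs; lia.
case: lr => [j|? a b]; last by rewrite /= !size_cat => _ Hs; move: (leaves_nonnil a) (leaves_nonnil b) (leaves_nonnil r) Hs; lia.
case: r => [k|? a b]; last by rewrite /= !size_cat => _ Hs; move: (leaves_nonnil a) (leaves_nonnil b) Hs; lia.
by move=> /= /P3 [|[|[|[|[|]]]]] [-> -> ->] _; auto.
Qed.

Section S2R.
Variable F : fieldType.
Implicit Types g : tree -> F.

Lemma in_s2R_ext g1 g2 : (forall s, valid 3 s -> g1 s = g2 s) -> in_s2R g1 -> in_s2R g2.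
Proof. by move=> E [c Hc]; exists c => s Hs; rewrite -E // Hc. Qed.

Lemma in_s2R_add g1 g2 : in_s2R g1 -> in_s2R g2 -> in_s2R (fun s => g1 s + g2 s).
Proof.
move=> [c1 H1] [c2 H2]; exists (fun i => c1 i + c2 i) => s Hs.
by rewrite H1 // H2 // -big_split; apply: eq_bigr => i _; rewrite mulrDl.
Qed.

Lemma in_s2R_scale (k : F) g : in_s2R g -> in_s2R (fun s => k * g s).
Proof.
move=> [c H]; exists (fun i => k * c i) => s Hs.
by rewrite H // mulr_sumr; apply: eq_bigr => i _; rewrite mulrA.
Qed.

Lemma in_s2R0 : in_s2R (fun _ => 0 : F).
Proof. by exists (fun _ => 0) => s _; rewrite big1 // => i _; rewrite mul0r. Qed.

Definition cst g (i : 'I_6) : F :=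
  match val i with
  | 0 => g (N MU (N MU (L 0) (L 1)) (L 2))
  | 1 => - g (N MU (N MU (L 0) (L 2)) (L 1))
  | 2 => g (N BE (N BE (L 0) (L 1)) (L 2))
  | 3 => g (N BE (N MU (L 1) (L 2)) (L 0))
  | 4 => g (N BE (N MU (L 0) (L 2)) (L 1))
  | _ => g (N BE (N MU (L 0) (L 1)) (L 2))
  end.

Lemma in_s2R_char g :
  (forall s, valid 3 s -> g s = \sum_(i < 6) cst g i * s2R_gen F i s) -> in_s2R g.
Proof. by move=> H; exists (cst g). Qed.

Lemma in_s2R_degsign g : in_s2R g -> in_s2R (fun s => (-1) ^+ deg s * g s).
Proof.
move=> [c H]; exists (fun i => (if (val i < 3)%N then 1 else -1) * c i) => s Hs.
rewrite H //; move: s Hs; apply: valid3_cases => b1 b2; case: b1; case: b2;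
  rewrite !big_ord_recr !big_ord0 /s2R_gen /cls /= sgnE /=; ring.
Qed.

End S2R.

Section Dec.
Variable F : fieldType.
Variables (b0 : bool) (w : nat -> nat -> F) (A B C : tree).

Notation gr s := (graft3 s A B C).

Fixpoint locs (G : tree -> F) (s : tree) (pre : nat) : F :=
  match s with
  | Lf _ => 0
  | Nd b l r =>
     (if b == b0 then (-1) ^+ pre * w (nleaves (gr l)) (nleaves (gr r)) * G (Nd (~~b) l r) else 0)
     + locs (fun x => G (Nd b x r)) l (pre + degv b)%N
     + locs (fun y => G (Nd b l y)) r (pre + degv b + deg (gr l))%N
  end.

Fixpoint blks (g : tree -> F) (s : tree) (pre : nat) : F :=
  match s with
  | Lf i => gsum b0 w g (gr (Lf i)) pre
  | Nd b l r =>
     blks (fun x => g (Nd b x (gr r))) l (pre + degv b)%N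
     + blks (fun y => g (Nd b (gr l) y)) r (pre + degv b + deg (gr l))%N
  end.

Lemma gsum_graft g s pre :
  gsum b0 w g (gr s) pre = locs (fun s' => g (gr s')) s pre + blks g s pre.
Proof.
elim: s g pre => [i|b l IHl r IHr] g pre; first by rewrite /= add0r.
rewrite /= IHl IHr /=; ring.
Qed.

Inductive flips : tree -> tree -> Prop :=
| fs_root l r : flips (Nd b0 l r) (Nd (~~b0) l r)
| fs_left b l l' r : flips l l' -> flips (Nd b l r) (Nd b l' r)
| fs_right b l r r' : flips r r' -> flips (Nd b l r) (Nd b l r').

Lemma flips_leaves s u : flips s u -> leaves u = leaves s.
Proof. by elim=> //= *; congruence. Qed.

Lemma locs_eq G G' s pre :
  (forall u, flips s u -> G u = G' u) -> locs G s pre = locs G' s pre.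
Proof.
elim: s G G' pre => //= b l IHl r IHr G G' pre H.
rewrite (IHl (fun x => G (Nd b x r)) (fun x => G' (Nd b x r))); last first.
  by move=> u Hu; apply: H; constructor.
rewrite (IHr (fun x => G (Nd b l x)) (fun x => G' (Nd b l x))); last first.
  by move=> u Hu; apply: H; constructor.
case: eqP => // Eb; rewrite H // Eb; exact: fs_root.
Qed.

Lemma locs_pre G s pre : locs G s pre = (-1) ^+ pre * locs G s 0.
Proof.
suff H : forall k, locs G s (pre + k) = (-1) ^+ pre * locs G s k by rewrite -H addn0.
elim: s G pre => [i|b l IHl r IHr] G pre k /=; first by rewrite mulr0.
rewrite -!addnA IHl IHr exprD; case: eqP => _; ring.
Qed.

End Dec.

Fixpoint sumS (a : nat * nat) (l : seq (nat * nat)) : nat :=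
  match l with
  | [::] => 0
  | x :: l' => ((if x.1 < a.1 then a.2 * x.2 else 0) + sumS a l')%N
  end.
Fixpoint kinvS (l : seq (nat * nat)) : nat :=
  match l with
  | [::] => 0
  | a :: l' => (sumS a l' + kinvS l')%N
  end.

Lemma kinvE l : kinv l = kinvS l.
Proof.
elim: l => //= a l ->; congr (_ + _)%N.
elim: l => [|x l IH] /=; first by rewrite big_nil.
by rewrite big_cons -IH; case: ifP.
Qed.

Ltac zclean := repeat match goal with |- context [(0 + ?x)%N] => rewrite (add0n x) end.
Ltac oddnorm := zclean; repeat match goal with
  | |- context [odd (?m + ?n)] => rewrite (oddD m n)
  | |- context [odd (?m * ?n)] => rewrite (oddM m n)
  | |- context [odd (?m.+1)] => rewrite (oddS m)
  end.

Ltac oddcases := repeat match goal with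
  | |- context [odd (deg ?X)] => case: (odd (deg X))
  end.

Section Loc.
Variable F : fieldType.

Lemma ksign_sq s A B C : ksign F s A B C * ksign F s A B C = 1.
Proof. by rewrite /ksign -exprD -signr_odd oddD addbb. Qed.

Variables (b0 : bool) (w : nat -> nat -> F) (A B C : tree).
Notation gr s := (graft3 s A B C).

Fixpoint locsD (G : tree -> F) (s : tree) (p : nat) : F :=
  match s with
  | Lf _ => 0
  | Nd b l r =>
     (if b == b0 then (-1) ^+ p * w (nleaves (gr l)) (nleaves (gr r)) * G (Nd (~~b) l r) else 0)
     + locsD (fun x => G (Nd b x r)) l (p + degv b)%N
     + locsD (fun y => G (Nd b l y)) r (p + degv b + deg l)%N
  end.

Lemma locs_sign G s : valid 3 s ->
  ksign F s A B C * locs b0 w A B C G s 0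
  = locsD (fun s' => (-1) ^+ kinvS (toks s' A B C) * G s') s 0.
Proof.
move: s; apply: valid3_cases => b1 b2; case: b1; case: b2;
rewrite /ksign kinvE /= !sgnE; oddnorm; rewrite /=; oddcases; case: b0; rewrite /=; ring.
Qed.



Definition gs6 (c : 'I_6 -> F) (s : tree) : F :=
  c (@Ordinal 6 0 isT) * s2R_gen F (@Ordinal 6 0 isT) s
  + c (@Ordinal 6 1 isT) * s2R_gen F (@Ordinal 6 1 isT) s
  + c (@Ordinal 6 2 isT) * s2R_gen F (@Ordinal 6 2 isT) s
  + c (@Ordinal 6 3 isT) * s2R_gen F (@Ordinal 6 3 isT) s
  + c (@Ordinal 6 4 isT) * s2R_gen F (@Ordinal 6 4 isT) s
  + c (@Ordinal 6 5 isT) * s2R_gen F (@Ordinal 6 5 isT) s.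

Lemma gs6E c s : \sum_(i < 6) c i * s2R_gen F i s = gs6 c s.
Proof.
rewrite !big_ord_recl big_ord0 addr0 /gs6 !addrA.
by congr (_ + _ + _ + _ + _ + _); congr (c _ * s2R_gen F _ s); apply: val_inj.
Qed.

Lemma in_s2R_char6 g : (forall s, valid 3 s -> g s = gs6 (cst g) s) -> in_s2R g.
Proof. by move=> H; apply: in_s2R_char => s Hs; rewrite gs6E H. Qed.

Lemma loc_span c : (b0 = true /\ w = wd) \/ (b0 = false /\ w = wh) ->
  in_s2R (fun s => locsD (gs6 c) s 0).
Proof.
move=> Hbw; apply: in_s2R_char6.
move=> s Hs; move: s Hs;
apply: valid3_cases => b1 b2; case: b1; case: b2;
rewrite /cst /gs6 /= /s2R_gen /cls /=; case: Hbw => [][-> ->];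
rewrite /wd /wh /= ?nleaves_Nd !sgnE /= ?natrD ?natrM; ring.
Qed.

Lemma locsD_eq G G' s p :
  (forall u, flips b0 s u -> G u = G' u) -> locsD G s p = locsD G' s p.
Proof.
elim: s G G' p => //= b l IHl r IHr G G' p H.
rewrite (IHl (fun x => G (Nd b x r)) (fun x => G' (Nd b x r))); last first.
  by move=> u Hu; apply: H; constructor.
rewrite (IHr (fun x => G (Nd b l x)) (fun x => G' (Nd b l x))); last first.
  by move=> u Hu; apply: H; constructor.
case: eqP => // Eb; rewrite H // Eb; exact: fs_root.
Qed.

Lemma loc_s2R G pre : (b0 = true /\ w = wd) \/ (b0 = false /\ w = wh) ->
  in_s2R (fun s => ksign F s A B C * G s) ->
  in_s2R (fun s => ksign F s A B C * locs b0 w A B C G s pre).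
Proof.
move=> Hbw [c Hc].
apply: (@in_s2R_ext _ (fun s => (-1) ^+ pre * locsD (gs6 c) s 0)); last first.
  by apply: in_s2R_scale; apply: loc_span.
move=> s Hs; rewrite locs_pre mulrCA locs_sign //; congr (_ * _).
apply: locsD_eq => u Hu; have Hv : valid 3 u by rewrite /valid (flips_leaves Hu).
by rewrite -kinvE -/(ksign F u A B C) Hc // gs6E.
Qed.

End Loc.



Section Blk.
Variable F : fieldType.

Lemma gsum_s2R b0 (w : nat -> nat -> F) t (G : tree -> tree -> F) :
  (forall x, flip b0 t x -> in_s2R (fun s => G s x)) ->
  in_s2R (fun s => gsum b0 w (G s) t 0).
Proof.
elim: t G => [i|b l IHl r IHr] G H; first exact: in_s2R0.
apply: (@in_s2R_ext _ (fun s =>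
    (if b == b0 then w (nleaves l) (nleaves r) else 0) * G s (Nd (~~b) l r)
    + (-1) ^+ degv b * gsum b0 w (fun x => G s (Nd b x r)) l 0
    + (-1) ^+ (degv b + deg l) * gsum b0 w (fun y => G s (Nd b l y)) r 0)).
  by move=> s _; rewrite gsum_Nd.
apply: in_s2R_add; [apply: in_s2R_add|].
- case: eqP => Hb.
    by apply: in_s2R_scale; apply: H; rewrite Hb; exact: fl_root.
  by apply: (in_s2R_ext (g1 := fun _ => 0)) => [s _|]; rewrite ?mul0r //; exact: in_s2R0.
- apply: in_s2R_scale; apply: (IHl (fun s x => G s (Nd b x r))) => x Hx.
  by apply: H; constructor.
- apply: in_s2R_scale; apply: (IHr (fun s x => G s (Nd b l x))) => x Hx.
  by apply: H; constructor.
Qed.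



Variables (b0 : bool) (w : nat -> nat -> F) (A B C : tree).
Notation gr s := (graft3 s A B C).

Fixpoint hasl (k : nat) (s : tree) : bool :=
  match s with Lf i => i == k | Nd _ l r => hasl k l || hasl k r end.
Fixpoint loff (k : nat) (s : tree) : nat :=
  match s with
  | Lf _ => 0
  | Nd b l r => (degv b + (if hasl k l then loff k l else deg (gr l) + loff k r))%N
  end.

Ltac oddcases2 := repeat match goal with
  | |- context [odd (deg ?X)] => case: (odd (deg X))
  end.

Lemma sgnA s x : valid 3 s -> odd (deg x) = ~~ odd (deg A) ->
  ksign F s A B C * (-1) ^+ loff 0 s = (-1) ^+ deg s * ksign F s x B C.
Proof.
move=> + Hx; move: s; apply: valid3_cases => b1 b2; case: b1; case: b2;
rewrite /ksign !kinvE /= !sgnE; oddnorm; rewrite /= ?Hx; oddcases2; rewrite /=; ring.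
Qed.


Lemma sgnB s x : valid 3 s -> odd (deg x) = ~~ odd (deg B) ->
  ksign F s A B C * (-1) ^+ loff 1 s = (-1) ^+ deg A * ((-1) ^+ deg s * ksign F s A x C).
Proof.
move=> + Hx; move: s; apply: valid3_cases => b1 b2; case: b1; case: b2;
rewrite /ksign !kinvE /= !sgnE; oddnorm; rewrite /= ?Hx; oddcases2; rewrite /=; ring.
Qed.

Lemma sgnC s x : valid 3 s -> odd (deg x) = ~~ odd (deg C) ->
  ksign F s A B C * (-1) ^+ loff 2 s
  = (-1) ^+ (deg A + deg B) * ((-1) ^+ deg s * ksign F s A B x).
Proof.
move=> + Hx; move: s; apply: valid3_cases => b1 b2; case: b1; case: b2;
rewrite /ksign !kinvE /= !sgnE; oddnorm; rewrite /= ?Hx; oddcases2; rewrite /=; ring.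
Qed.

Lemma blks_valid g s pre : valid 3 s ->
  ksign F s A B C * blks b0 w A B C g s pre =
  (-1) ^+ pre * (gsum b0 w (fun x => ksign F s A B C * (-1) ^+ (loff 0 s) * g (graft3 s x B C)) A 0
    + gsum b0 w (fun x => ksign F s A B C * (-1) ^+ (loff 1 s) * g (graft3 s A x C)) B 0
    + gsum b0 w (fun x => ksign F s A B C * (-1) ^+ (loff 2 s) * g (graft3 s A B x)) C 0).
Proof.
rewrite !gsumZ; move: s; apply: valid3_cases => b1 b2; case: b1; case: b2; rewrite /=;
repeat match goal with |- context [gsum ?b ?w ?g ?t (?p + ?q)%N] =>
  rewrite (gsum_pre b w g t (p + q)) end;
rewrite /ksign !kinvE /= !sgnE; oddnorm; rewrite /=; oddcases2;
case: (odd pre); rewrite /=; ring.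
Qed.

End Blk.

Fixpoint dctx (c : ctx) : nat :=
  match c with Hole => 0 | CL b c' r => degv b + dctx c' + deg r
  | CR b l c' => degv b + deg l + dctx c' end.
Fixpoint nctx (c : ctx) : nat :=
  match c with Hole => 0 | CL b c' r => nctx c' + nleaves r
  | CR b l c' => nleaves l + nctx c' end.

Lemma deg_plug c t : deg (plug c t) = (dctx c + deg t)%N.
Proof. by elim: c => //= [b c' IH r|b l c' IH]; rewrite IH; lia. Qed.
Lemma nleaves_plug c t : nleaves (plug c t) = (nctx c + nleaves t)%N.
Proof. by elim: c => //= [b c' IH r|b l c' IH]; rewrite nleaves_Nd IH; lia. Qed.

Lemma deg_gr A B C s : valid 3 s ->
  deg (graft3 s A B C) = (deg s + deg A + deg B + deg C)%N.
Proof. by move: s; apply: valid3_cases => b1 b2 /=; lia. Qed.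
Lemma nleaves_gr A B C s : valid 3 s ->
  nleaves (graft3 s A B C) = (nleaves A + nleaves B + nleaves C)%N.
Proof. by move: s; apply: valid3_cases => b1 b2 /=; rewrite !nleaves_Nd; lia. Qed.

Section Ctx.
Variable F : fieldType.

Definition Good (g : tree -> F) :=
  forall c A B C, in_s2R (fun s => ksign F s A B C * g (plug c (graft3 s A B C))).

Lemma blk_s2R b0 (w : nat -> nat -> F) A B C g pre : Good g ->
  in_s2R (fun s => ksign F s A B C * blks b0 w A B C g s pre).
Proof.
move=> Hg.
apply: (@in_s2R_ext _ (fun s => (-1) ^+ pre *
   (gsum b0 w (fun x => ksign F s A B C * (-1) ^+ (loff A B C 0 s) * g (graft3 s x B C)) A 0
    + gsum b0 w (fun x => ksign F s A B C * (-1) ^+ (loff A B C 1 s) * g (graft3 s A x C)) B 0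
    + gsum b0 w (fun x => ksign F s A B C * (-1) ^+ (loff A B C 2 s) * g (graft3 s A B x)) C 0))).
  by move=> s Hs; rewrite blks_valid.
apply: in_s2R_scale; apply: in_s2R_add; [apply: in_s2R_add|].
- apply: (@gsum_s2R F b0 w A (fun s x => ksign F s A B C * (-1) ^+ (loff A B C 0 s) * g (graft3 s x B C))).
  move=> x /flip_odd Hx.
  apply: (@in_s2R_ext _ (fun s => (-1) ^+ deg s * (ksign F s x B C * g (graft3 s x B C)))).
    by move=> s Hs; rewrite (sgnA F B C Hs Hx) mulrA.
  by apply: in_s2R_degsign; exact: (Hg Hole x B C).
- apply: (@gsum_s2R F b0 w B (fun s x => ksign F s A B C * (-1) ^+ (loff A B C 1 s) * g (graft3 s A x C))).
  move=> x /flip_odd Hx.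
  apply: (@in_s2R_ext _ (fun s => (-1) ^+ deg A * ((-1) ^+ deg s * (ksign F s A x C * g (graft3 s A x C))))).
    by move=> s Hs; rewrite (sgnB F A C Hs Hx) !mulrA.
  by apply: in_s2R_scale; apply: in_s2R_degsign; exact: (Hg Hole A x C).
- apply: (@gsum_s2R F b0 w C (fun s x => ksign F s A B C * (-1) ^+ (loff A B C 2 s) * g (graft3 s A B x))).
  move=> x /flip_odd Hx.
  apply: (@in_s2R_ext _ (fun s => (-1) ^+ (deg A + deg B) * ((-1) ^+ deg s * (ksign F s A B x * g (graft3 s A B x))))).
    by move=> s Hs; rewrite (sgnC F A B Hs Hx) !mulrA.
  by apply: in_s2R_scale; apply: in_s2R_degsign; exact: (Hg Hole A B x).
Qed.


Lemma ctx_s2R b0 (w : nat -> nat -> F) :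
  (b0 = true /\ w = wd) \/ (b0 = false /\ w = wh) ->
  forall c g pre A B C, Good g ->
  in_s2R (fun s => ksign F s A B C * gsum b0 w g (plug c (graft3 s A B C)) pre).
Proof.
move=> Hbw c; elim: c => [|b c' IH r|b l c' IH] g pre A B C Hg.
- apply: (@in_s2R_ext _ (fun s => ksign F s A B C * locs b0 w A B C (fun s' => g (graft3 s' A B C)) s pre
     + ksign F s A B C * blks b0 w A B C g s pre)).
    by move=> s _; rewrite /= gsum_graft mulrDr.
  apply: in_s2R_add; first by apply: loc_s2R => //; exact: (Hg Hole A B C).
  exact: blk_s2R.
- apply: (@in_s2R_ext _ (fun s =>
     (if b == b0 then (-1) ^+ pre * w (nctx c' + (nleaves A + nleaves B + nleaves C))%N (nleaves r) else 0)
       * (ksign F s A B C * g (plug (CL (~~b) c' r) (graft3 s A B C)))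
     + ksign F s A B C * gsum b0 w (fun x => g (Nd b x r)) (plug c' (graft3 s A B C)) (pre + degv b)
     + (-1) ^+ (pre + degv b + dctx c' + deg A + deg B + deg C) * ((-1) ^+ deg s *
         gsum b0 w (fun y => ksign F s A B C * g (plug (CL b c' y) (graft3 s A B C))) r 0))).
    move=> s Hs /=; rewrite [in RHS](gsum_pre b0 w _ r) gsumZ nleaves_plug nleaves_gr //.
    rewrite deg_plug deg_gr //.
    have -> : (pre + degv b + (dctx c' + (deg s + deg A + deg B + deg C)) =
       (pre + degv b + dctx c' + deg A + deg B + deg C) + deg s)%N by lia.
    rewrite (exprD _ (pre + degv b + dctx c' + deg A + deg B + deg C) (deg s)); case: eqP => _; ring.
  apply: in_s2R_add; [apply: in_s2R_add|].
  + by apply: in_s2R_scale; exact: (Hg (CL (~~b) c' r) A B C).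
  + apply: (IH (fun x => g (Nd b x r))) => c'' A' B' C'; exact: (Hg (CL b c'' r) A' B' C').
  + apply: in_s2R_scale; apply: in_s2R_degsign.
    apply: (@gsum_s2R F b0 w r (fun s y => ksign F s A B C * g (plug (CL b c' y) (graft3 s A B C)))).
    by move=> y _; exact: (Hg (CL b c' y) A B C).
- apply: (@in_s2R_ext _ (fun s =>
     (if b == b0 then (-1) ^+ pre * w (nleaves l) (nctx c' + (nleaves A + nleaves B + nleaves C))%N else 0)
       * (ksign F s A B C * g (plug (CR (~~b) l c') (graft3 s A B C)))
     + (-1) ^+ (pre + degv b) *
         gsum b0 w (fun x => ksign F s A B C * g (plug (CR b x c') (graft3 s A B C))) l 0
     + ksign F s A B C * gsum b0 w (fun y => g (Nd b l y)) (plug c' (graft3 s A B C)) (pre + degv b + deg l))).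
    move=> s Hs /=; rewrite [in RHS](gsum_pre b0 w _ l) gsumZ nleaves_plug nleaves_gr //.
    case: eqP => _; ring.
  apply: in_s2R_add; [apply: in_s2R_add|].
  + by apply: in_s2R_scale; exact: (Hg (CR (~~b) l c') A B C).
  + apply: in_s2R_scale.
    apply: (@gsum_s2R F b0 w l (fun s x => ksign F s A B C * g (plug (CR b x c') (graft3 s A B C)))).
    by move=> x _; exact: (Hg (CR b x c') A B C).
  + apply: (IH (fun y => g (Nd b l y))) => c'' A' B' C'; exact: (Hg (CR b l c'') A' B' C').
Qed.

End Ctx.

Fixpoint vctx (c : ctx) : nat :=
  match c with Hole => 0 | CL b c' r => (vctx c' + nvert r).+1
  | CR b l c' => (nvert l + vctx c').+1 end.

Lemma nvert_plug c t : nvert (plug c t) = (vctx c + nvert t)%N.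
Proof. by elim: c => //= [b c' IH r|b l c' IH]; rewrite IH; lia. Qed.
Lemma nvert_gr A B C s : valid 3 s ->
  nvert (graft3 s A B C) = (2 + nvert A + nvert B + nvert C)%N.
Proof. by move: s; apply: valid3_cases => b1 b2 /=; lia. Qed.
Lemma nleaves_nvert t : nleaves t = (nvert t).+1.
Proof. by elim: t => //= b l IHl r IHr; rewrite nleaves_Nd IHl IHr; lia. Qed.

Lemma relabel_nleaves p t : nleaves (relabel p t) = nleaves t.
Proof. by elim: t => //= b l IHl r IHr; rewrite !nleaves_Nd IHl IHr. Qed.
Lemma relabel_deg p t : deg (relabel p t) = deg t.
Proof. by elim: t => //= b l IHl r IHr; rewrite IHl IHr. Qed.
Lemma relabel_nvert p t : nvert (relabel p t) = nvert t.
Proof. by elim: t => //= b l IHl r IHr; rewrite IHl IHr. Qed.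

Lemma flip_Nd b0 t u : flip b0 t u -> exists b l r, u = Nd b l r.
Proof. by case=> *; do 3 eexists. Qed.

Lemma graft_Nd A B C s : valid 3 s -> exists b l r, graft3 s A B C = Nd b l r.
Proof. by move: s; apply: valid3_cases => b1 b2 /=; do 3 eexists. Qed.

Section Final.
Variable F : fieldType.

Lemma gsum_relabel b0 (w : nat -> nat -> F) p (f : tree -> F) t pre :
  gsum b0 w (fun u => f (relabel p u)) t pre = gsum b0 w f (relabel p t) pre.
Proof.
elim: t f pre => //= b l IHl r IHr f pre.
rewrite -(IHl (fun x => f (Nd b x (relabel p r)))) -(IHr (fun x => f (Nd b (relabel p l) x))).
by rewrite !relabel_nleaves relabel_deg.
Qed.

Lemma Good_gsum b0 (w : nat -> nat -> F) (f : tree -> F) :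
  (b0 = true /\ w = wd) \/ (b0 = false /\ w = wh) ->
  Good f -> Good (fun t => gsum b0 w f t 0).
Proof. by move=> Hbw Hf c A B C; exact: (ctx_s2R Hbw c 0 A B C Hf). Qed.

Lemma Gshriek_dpsi n (f : tree -> F) : Gshriek n f -> Gshriek n (dpsi f).
Proof.
move=> [Ht He]; split; first exact: Tc_dpsi.
move=> c A B C.
apply: (in_s2R_ext (g1 := fun s => ksign F s A B C * gsum true wd f (plug c (graft3 s A B C)) 0)).
  by move=> s _; rewrite dpsiE.
exact: (Good_gsum (or_introl (conj erefl erefl)) He).
Qed.

Lemma Gshriek_Hop n (f : tree -> F) : Gshriek n f -> Gshriek n (Hop f).
Proof.
move=> [Ht He]; split; first exact: Tc_Hop.
move=> c A B C.
apply: (in_s2R_ext (g1 := fun s => ('C((vctx c + (2 + nvert A + nvert B + nvert C)).+1, 2))%:R^-1 *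
   (ksign F s A B C * gsum false wh f (plug c (graft3 s A B C)) 0))).
  by move=> s Hs; rewrite HopE nvert_plug nvert_gr // mulrCA.
apply: in_s2R_scale; exact: (Good_gsum (or_intror (conj erefl erefl)) He).
Qed.

Lemma dd_dpsi (f : tree -> F) t : dpsi (dpsi f) t = 0.
Proof.
rewrite dpsiE (gsum_eq (fun u => gsum true wd f u 0)) ?dd // => u _; exact: dpsiE.
Qed.

Lemma Gshriek_coaug n (x : F) : Gshriek n (coaug n x).
Proof.
split; first split.
- move=> [[|i]|b l r] //=; case: eqP => // -> /negP []; by [].
- by move=> t t' e; case=> *; rewrite /= mulr0.
- move=> c A B C; apply: (in_s2R_ext (g1 := fun _ => 0)); last exact: in_s2R0.
  move=> s Hs; have [b [l [r ->]]] := graft_Nd A B C Hs.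
  by case: c => *; rewrite /= mulr0.
Qed.

Lemma counit_dpsi n (f : tree -> F) : counit n (dpsi f) = 0.
Proof. by rewrite /counit; case: eqP. Qed.

Lemma dpsi_coaug n (x : F) t : dpsi (coaug n x) t = 0.
Proof.
rewrite dpsiE (gsum_eq (fun _ => 0)) ?gsum0 // => u /flip_Nd [b [l [r ->]]] //.
Qed.

Lemma dpsi_relabel n (s : 'S_n) (f : tree -> F) t :
  dpsi (fun u => f (relabel (permf s) u)) t = dpsi f (relabel (permf s) t).
Proof. by rewrite !dpsiE gsum_relabel. Qed.

Lemma Hop_relabel n (s : 'S_n) (f : tree -> F) t :
  Hop (fun u => f (relabel (permf s) u)) t = Hop f (relabel (permf s) t).
Proof. by rewrite !HopE gsum_relabel relabel_nvert. Qed.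


Lemma valid_Lf n i : valid n (Lf i) -> n = 1%N /\ i = 0%N.
Proof.
rewrite /valid => Hp; have := perm_size Hp; rewrite size_iota /= => En.
subst n; move: Hp; rewrite /= => /perm_mem/(_ i); rewrite !inE eqxx.
by move/esym/eqP.
Qed.

Lemma homot (charF0 : [pchar F] =i pred0) n (f : tree -> F) : Gshriek n f -> forall t,
  f t - coaug n (counit n f) t = dpsi (Hop f) t + Hop (dpsi f) t.
Proof.
move=> [[Hsup _] _] t.
have E1 : dpsi (Hop f) t = ('C((nvert t).+1, 2))%:R^-1 * gsum true wd (fun u => gsum false wh f u 0) t 0.
  rewrite dpsiE -gsumZ; apply: gsum_eq => u Hu; by rewrite HopE (flip_nvert Hu).
have E2 : Hop (dpsi f) t = ('C((nvert t).+1, 2))%:R^-1 * gsum false wh (fun u => gsum true wd f u 0) t 0.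
  by rewrite HopE; congr (_ * _); apply: gsum_eq => u _; exact: dpsiE.
rewrite E1 E2 -mulrDr dk nleaves_nvert; clear E1 E2.
case: t => [i|b l r].
- rewrite /= bin_small // mul0r mulr0 /coaug /counit.
  case: i => [|i].
    case: eqP => [_|Hn]; first by rewrite subrr.
    rewrite subr0 Hsup //; apply/negP => /valid_Lf [] //.
  rewrite subr0 Hsup //; apply/negP => /valid_Lf [] //.
- rewrite /coaug subr0 mulrA mulVf ?mul1r //.
  have /pcharf0P H := charF0; rewrite H /=.
  by rewrite -lt0n bin_gt0.
Qed.

End Final.

Theorem proposition2p8 (F : fieldType) (charF0 : [pchar F] =i pred0) :
  (* d_psi restricts to a differential on G^¡ *)
  (forall n (f : tree -> F), Gshriek n f -> Gshriek n (dpsi f)) /\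
  (forall n (f : tree -> F), Gshriek n f -> forall t, dpsi (dpsi f) t = 0) /\
  (* the homotopy H restricts to G^¡ *)
  (forall n (f : tree -> F), Gshriek n f -> Gshriek n (Hop f)) /\
  (* counit and coaugmentation are maps of dg S-modules (I, 0) <-> (G^¡, d_psi) *)
  (forall n (x : F), Gshriek n (coaug n x)) /\
  (forall n (f : tree -> F), Gshriek n f -> counit n (dpsi f) = 0) /\
  (forall n (x : F) t, dpsi (coaug n x) t = 0) /\
  (* S_n-equivariance of d_psi and H *)
  (forall n (s : 'S_n) (f : tree -> F), Gshriek n f -> forall t,
      dpsi (fun u => f (relabel (permf s) u)) t = dpsi f (relabel (permf s) t)) /\
  (forall n (s : 'S_n) (f : tree -> F), Gshriek n f -> forall t,
      Hop (fun u => f (relabel (permf s) u)) t = Hop f (relabel (permf s) t)) /\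
  (* deformation retract identities *)
  (forall x : F, counit 1 (coaug 1 x) = x) /\
  (forall n (f : tree -> F), Gshriek n f -> forall t,
      f t - coaug n (counit n f) t = dpsi (Hop f) t + Hop (dpsi f) t) /\
  (* in particular H_*(G^¡, d_psi) = I: every cycle is homologous to
     coaug (counit f) *)
  (forall n (f : tree -> F), Gshriek n f -> (forall t, dpsi f t = 0) ->
      exists g, Gshriek n g /\
        forall t, f t = coaug n (counit n f) t + dpsi g t).
Proof.
refine (conj _ (conj _ (conj _ (conj _ (conj _ (conj _ (conj _ (conj _ (conj _ (conj _ _)))))))))).
- by move=> n f; apply: Gshriek_dpsi.
- by move=> n f _ t; apply: dd_dpsi.
- by move=> n f; apply: Gshriek_Hop.
- by move=> n x; apply: Gshriek_coaug.
- by move=> n f _; apply: counit_dpsi.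
- by move=> n x t; apply: dpsi_coaug.
- by move=> n s f _ t; apply: dpsi_relabel.
- by move=> n s f _ t; apply: Hop_relabel.
- by move=> x; rewrite /counit /coaug.
- by move=> n f Hf t; apply: homot.
- move=> n f Hf Hd; exists (Hop f); split; first exact: Gshriek_Hop.
  move=> t; have H := homot charF0 Hf t.
  have H0 : Hop (dpsi f) t = 0.
    by rewrite HopE (gsum_eq (fun _ => 0)) ?gsum0 ?mulr0 // => u _; exact: Hd.
  by rewrite H0 addr0 in H; rewrite -H addrC subrK.
Qed.
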